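(* Consider the multicast coalitional game with player set $\mathcal{N}=\{1,\dots,n\}$ and value function $$v(S)=\sum_{i\in S}U_i-\sum_{i\in S}\frac{\alpha_i}{R_S}-\frac{\beta+\gamma}{R_S},\qquad R_S=\min_{i\in S}R_i,$$ for nonempty $S\subseteq\mathcal{N}$, where the rates satisfy $R_1\le R_2\le\dots\le R_n$. Let $\mathbf{P}=\{P_1,\dots,P_n\}$ with $P_i=\{i\}$. If $$\frac{R_{i+1}}{R_i}\ge\frac{\alpha_{i+1}+\beta+\gamma}{\alpha_{i+1}}\quad\forall i\in\{1,\dots,n-1\},$$ then $\mathbf{P}$ is $\mathbb{D}_c$-stable.
   Context: A transmitter multicasts a file of size $X>0$ bits to users $\mathcal{N}$. User $i$ has valuation $U_i\in\mathbb{R}$, downloads at rate $R_i>0$, and consumes receive power $P_{Rx,i}>0$; the transmitter transmits at power $P_{Tx}>0$. Costs per unit energy are $a>0$ at users and $b>0$ at the transmitter; bandwidth cost per second is $w>0$. Set $\alpha_i=aP_{Rx,i}X$, $\beta=bP_{Tx}X$, $\gamma=wX$. A collection is a set $\mathbf{S}=\{S_1,\dots,S_k\}$ of mutually disjoint nonempty subsets of $\mathcal{N}$, with value $v(\mathbf{S})=\sum_{i=1}^kv(S_i)$. For a partition $\mathbf{P}=\{P_1,\dots,P_n\}$, $\mathbf{S}[\mathbf{P}]$ is the collection of the nonempty sets among $(\bigcup_{i=1}^kS_i)\cap P_1,\dots,(\bigcup_{i=1}^kS_i)\cap P_n$. A partition $\mathbf{P}$ is $\mathbb{D}_c$-stable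 if $v(\mathbf{S}[\mathbf{P}])\ge v(\mathbf{S})$ for every collection $\mathbf{S}$. The ordering $R_1\le\dots\le R_n$ is the paper's standing assumption that the coalitions of $\mathbf{P}$ are indexed in increasing order of rates. *)

(* Defs.v *)
From HB Require Import structures.
From mathcomp Require Import all_boot all_order all_algebra.
Set Implicit Arguments. Unset Strict Implicit. Unset Printing Implicit Defensive.
Import Order.TTheory GRing.Theory Num.Theory.
Local Open Scope ring_scope.

(* Players are 'I_n (index i corresponds to user i+1 of the paper). *)

(* R_S = min_{i in S} R_i (for nonempty S; 0 for the empty set, never used). *)
Definition Rmin (R : realFieldType) (n : nat) (Rt : 'I_n -> R) (S : {set 'I_n}) : R :=
  match [pick i in S] with
  | Some i0 => \big[Num.min/Rt i0]_(j in S) Rt j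
  | None => 0
  end.

Definition vS (R : realFieldType) (n : nat) (U Rt alpha : 'I_n -> R) (beta gamma : R)
  (S : {set 'I_n}) : R :=
  \sum_(i in S) U i - \sum_(i in S) alpha i / Rmin Rt S - (beta + gamma) / Rmin Rt S.

Definition collection (n : nat) (C : {set {set 'I_n}}) : bool :=
  trivIset C && (set0 \notin C).

Definition vC (R : realFieldType) (n : nat) (U Rt alpha : 'I_n -> R) (beta gamma : R)
  (C : {set {set 'I_n}}) : R :=
  \sum_(S in C) vS U Rt alpha beta gamma S.

Definition restrict (n : nat) (C P : {set {set 'I_n}}) : {set {set 'I_n}} :=
  [set cover C :&: B | B in P] :\ set0.

Definition Dc_stable (R : realFieldType) (n : nat) (U Rt alpha : 'I_n -> R) (beta gamma : R)
  (P : {set {set 'I_n}}) : Prop :=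
  forall C : {set {set 'I_n}}, collection C ->
    vC U Rt alpha beta gamma (restrict C P) >= vC U Rt alpha beta gamma C.

Definition singletons (n : nat) : {set {set 'I_n}} := [set [set i] | i : 'I_n].

(* Main.v *)
Require Import Defs.
From HB Require Import structures.
From mathcomp Require Import all_boot all_order all_algebra.
Import Order.TTheory GRing.Theory Num.Theory.
Local Open Scope ring_scope.
From mathcomp Require Import ring lra.

Lemma Rmin_min (R : realFieldType) (n : nat) (Rt : 'I_n -> R)
  (hsorted : forall i j : 'I_n, (i <= j)%N -> Rt i <= Rt j)
  (S : {set 'I_n}) (m : 'I_n) :
  m \in S -> (forall j, j \in S -> (m <= j)%N) -> Rmin Rt S = Rt m.
Proof.
move=> mS hm; rewrite /Rmin; case: pickP => [i0 i0S|/(_ m)]; last by rewrite mS.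
apply/eqP; rewrite eq_le; apply/andP; split.
  exact: bigmin_le_cond.
apply: le_bigmin; first exact/hsorted/hm.
by move=> j /hm /hsorted.
Qed.

Lemma Rmin1 (R : realFieldType) (n : nat) (Rt : 'I_n -> R) i :
  Rmin Rt [set i] = Rt i.
Proof.
rewrite /Rmin; case: pickP => [i0|/(_ i)]; last by rewrite set11.
rewrite inE => /eqP ->; rewrite bigmin_set1. by rewrite minxx.
Qed.

Lemma restrict_single n (C : {set {set 'I_n}}) :
  restrict C (singletons n) = [set [set i] | i in cover C].
Proof.
apply/setP => S; rewrite /restrict /singletons !inE.
apply/andP/imsetP.
  case=> SN /imsetP [B /imsetP [i _ ->] SE]; subst S.
  have iC : i \in cover C.
    case/set0Pn: SN => k; rewrite !inE => /andP [kC /eqP kI].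
    by rewrite -kI.
  exists i => //.
  apply/setP=> j; rewrite !inE; case: (eqVneq j i) => [->|]; last by rewrite andbF.
  by rewrite iC.
case=> i iC ->; split.
  by apply/set0Pn; exists i; rewrite set11.
apply/imsetP; exists [set i]; first by apply/imsetP; exists i.
apply/setP => j; rewrite !inE; case: (eqVneq j i) => [->|]; by rewrite ?iC ?andbF.
Qed.

Lemma key (R : realFieldType) (A c Ri Rp Rm : R) :
  0 < A -> 0 <= c -> 0 < Ri -> 0 < Rp -> 0 < Rm -> Rm <= Rp ->
  (A + c) / A <= Ri / Rp -> A / Ri + c / Ri <= A / Rm.
Proof.
move=> A0 c0 Ri0 Rp0 Rm0 RmRp h.
have e : A / Ri + c / Ri = (A + c) / Ri by rewrite mulrDl.
rewrite e; apply: (@le_trans _ _ (A / Rp)).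
  rewrite ler_pdivrMr //; rewrite ler_pdivrMr // in h.
  by have <- : Ri / Rp * A = A / Rp * Ri by ring.
rewrite ler_pM2l // lef_pV2 //; rewrite posrE //.
Qed.

Theorem theorem8 (R : realFieldType) (n : nat)
  (U Rt PRx : 'I_n -> R) (PTx X a b w : R)
  (hRt : forall i, 0 < Rt i) (hPRx : forall i, 0 < PRx i)
  (hPTx : 0 < PTx) (hX : 0 < X) (ha : 0 < a) (hb : 0 < b) (hw : 0 < w)
  (hsorted : forall i j : 'I_n, (i <= j)%N -> Rt i <= Rt j)
  (hcond : forall i j : 'I_n, val j = (val i).+1 ->
     Rt j / Rt i >= (a * PRx j * X + b * PTx * X + w * X) / (a * PRx j * X)) :
  Dc_stable U Rt (fun i => a * PRx i * X) (b * PTx * X) (w * X) (singletons n).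
Proof.
move=> C /andP [tC n0C].
rewrite /vC restrict_single big_imset; last by move=> x y _ _ /set1_inj.
rewrite (big_trivIset _ tC) /=.
apply: ler_sum => S SC.
have : S != set0 by apply: contraNneq n0C => <-.
case/set0Pn => i0 i0S.
case: (arg_minnP (fun i : 'I_n => val i) i0S) => m mS hm.
set c := b * PTx * X + w * X.
have c0 : 0 <= c by rewrite /c; apply: addr_ge0; apply/ltW; rewrite !mulr_gt0.
rewrite /vS (@Rmin_min _ _ _ hsorted _ _ mS hm).
under eq_bigr do rewrite Rmin1 !big_set1.
have -> : \sum_(i in S) (U i - a * PRx i * X / Rt i - (b * PTx * X + w * X) / Rt i)
  = \sum_(i in S) U i - \sum_(i in S) (a * PRx i * X / Rt i + c / Rt i).
  by rewrite -sumrB; apply: eq_bigr => i _; rewrite /c; ring.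
suff H : \sum_(i in S) (a * PRx i * X / Rt i + c / Rt i) <=
   \sum_(i in S) a * PRx i * X / Rt m + c / Rt m.
  rewrite -/c; lra.
rewrite (bigD1 m) //= [X in _ <= X + _](bigD1 m) //=.
suff H : \sum_(i in S | i != m) (a * PRx i * X / Rt i + c / Rt i) <=
   \sum_(i in S | i != m) a * PRx i * X / Rt m by lra.
apply: ler_sum => i /andP [iS inm].
have lt_mi : (m < i)%N by rewrite ltn_neqAle hm // andbT; apply: contra inm => /eqP e; apply/eqP/val_inj.
have ip : (i.-1 < n)%N by apply: leq_ltn_trans (leq_pred _) (ltn_ord i).
have hi : val i = (val (Ordinal ip)).+1 by rewrite /= prednK //; apply: leq_ltn_trans lt_mi.
apply: (@key _ _ _ _ (Rt (Ordinal ip))) => //.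
- by apply: mulr_gt0 => //; apply: mulr_gt0.
- by apply: hsorted => /=; rewrite -ltnS prednK //; apply: leq_ltn_trans lt_mi.
- by have := hcond _ _ hi; rewrite /c addrA.
Qed.
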